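(* Let $X$ be a Banach lattice with order continuous norm and $S$ a convex $C_0$-semigroup on $X$. Suppose that $S'_+(t,x)y=S'_-(t,x)y$ for some $x,y\in X$ and some $t\ge0$. Then the maps $[0,\infty)\to X$, $s\mapsto S'_\pm(s,x)y$ are continuous at $t$. In particular, $\lim_{s\downarrow0}S'_\pm(s,x)y=y$.
   Context: A Banach lattice $X$ has order continuous norm if $\|x_\alpha\|\to0$ for every net $x_\alpha\downarrow0$. An operator $T\colon X\to X$ is convex if $T(\lambda x+(1-\lambda)y)\le\lambda Tx+(1-\lambda)Ty$, bounded if $\sup_{\|x\|\le r}\|Tx\|<\infty$ for all $r>0$. A convex $C_0$-semigroup is a family $(S(t))_{t\ge0}$ of bounded convex operators $X\to X$ with $S(0)=\mathrm{id}$, $S(t+s)=S(t)S(s)$, and $S(t)x\to x$ as $t\downarrow0$. For $t\ge0$, $x,y\in X$: $S'_+(t,x)y:=\inf_{h>0}\frac{S(t)(x+hy)-S(t)x}{h}$ and $S'_-(t,x)y:=\sup_{h<0}\frac{S(t)(x+hy)-S(t)x}{h}$ (lattice infimum/supremum, which exist in $X$). *)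

(* Defs.v *)
From HB Require Import structures.
From mathcomp Require Import all_boot all_order all_algebra.
From mathcomp Require Import all_classical all_reals all_analysis.
Set Implicit Arguments. Unset Strict Implicit. Unset Printing Implicit Defensive.
Import Order.TTheory GRing.Theory Num.Theory.
Import numFieldNormedType.Exports.
Local Open Scope classical_set_scope.
Local Open Scope ring_scope.

(* A Banach lattice structure on a Banach space X: a partial order [vle]
   compatible with the vector operations, with binary suprema [vjoin],
   and a lattice norm (|x| <= |y| implies ||x|| <= ||y||). *)
Record banach_lattice (R : realType) (X : completeNormedModType R) := BanachLattice {
  vle : X -> X -> Prop;
  vjoin : X -> X -> X;
  vle_refl : forall x, vle x x;
  vle_anti : forall x y, vle x y -> vle y x -> x = y;
  vle_trans : forall x y z, vle x y -> vle y z -> vle x z;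
  vle_add : forall x y z, vle x y -> vle (x + z) (y + z);
  vle_scale : forall (a : R) x y, 0 <= a -> vle x y -> vle (a *: x) (a *: y);
  vjoin_ubl : forall x y, vle x (vjoin x y);
  vjoin_ubr : forall x y, vle y (vjoin x y);
  vjoin_lub : forall x y z, vle x z -> vle y z -> vle (vjoin x y) z;
  vnorm_mono : forall x y, vle (vjoin x (- x)) (vjoin y (- y)) -> `|x| <= `|y|
}.

Section BL.
Variables (R : realType) (X : completeNormedModType R) (L : banach_lattice X).

Definition is_lower_bound (A : set X) (z : X) := forall a, A a -> vle L z a.
Definition is_upper_bound (A : set X) (z : X) := forall a, A a -> vle L a z.
Definition is_inf (A : set X) (z : X) :=
  is_lower_bound A z /\ forall w, is_lower_bound A w -> vle L w z.
Definition is_sup (A : set X) (z : X) :=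
  is_upper_bound A z /\ forall w, is_upper_bound A w -> vle L z w.

Definition order_continuous :=
  forall (I : Type) (leI : I -> I -> Prop) (x : I -> X),
    (exists i : I, True) ->
    (forall i, leI i i) ->
    (forall i j k, leI i j -> leI j k -> leI i k) ->
    (forall i j, exists k, leI i k /\ leI j k) ->
    (forall i j, leI i j -> vle L (x j) (x i)) ->
    is_inf (range x) 0 ->
    forall eps : R, 0 < eps -> exists i0, forall i, leI i0 i -> `|x i| < eps.

Definition convex_op (T : X -> X) :=
  forall (l : R) x y, 0 <= l <= 1 ->
    vle L (T (l *: x + (1 - l) *: y)) (l *: T x + (1 - l) *: T y).

Definition bounded_op (T : X -> X) :=
  forall r : R, 0 < r -> exists M : R, forall x, `|x| <= r -> `|T x| <= M.

(* A convex C_0-semigroup; S t is only relevant for t >= 0. *)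
Definition convex_C0_semigroup (S : R -> X -> X) :=
  [/\ forall t, 0 <= t -> convex_op (S t),
      forall t, 0 <= t -> bounded_op (S t),
      S 0 = id,
      forall t s, 0 <= t -> 0 <= s -> S (t + s) = S t \o S s &
      forall x, S t x @[t --> 0^'+] --> x].

Definition dplus (S : R -> X -> X) (t : R) (x y : X) : X :=
  xget 0 (is_inf [set h^-1 *: (S t (x + h *: y) - S t x) | h in [set h : R | 0 < h]]).

Definition dminus (S : R -> X -> X) (t : R) (x y : X) : X :=
  xget 0 (is_sup [set h^-1 *: (S t (x + h *: y) - S t x) | h in [set h : R | h < 0]]).

End BL.

(* Main.v *)
Require Import Defs.
From HB Require Import structures.
From mathcomp Require Import all_boot all_order all_algebra.
From mathcomp Require Import all_classical all_reals all_analysis.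
Import Order.TTheory GRing.Theory Num.Theory.
Import numFieldNormedType.Exports.
Local Open Scope classical_set_scope.
Local Open Scope ring_scope.
From mathcomp Require Import ring lra.
Set Implicit Arguments. Unset Strict Implicit. Unset Printing Implicit Defensive.

Section Lat.
Variables (R : realType) (X : completeNormedModType R) (L : banach_lattice X).
Local Notation lev := (vle L).
Local Notation vj := (vjoin L).
Definition vabs (a : X) := vj a (- a).

Lemma lev_trans a b c : lev a b -> lev b c -> lev a c.
Proof. exact: vle_trans. Qed.

Lemma levD a b c d : lev a b -> lev c d -> lev (a + c) (b + d).
Proof.
move=> ab cd; apply: (lev_trans (vle_add c ab)).
by rewrite (addrC b c) (addrC b d); apply: vle_add.
Qed.

Lemma levN a b : lev a b -> lev (- b) (- a).
Proof.
move=> ab; have := vle_add (- a - b) ab.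
by rewrite addrA subrr add0r addrCA subrr addr0.
Qed.

Lemma levNr a b : lev (- a) (- b) -> lev b a.
Proof. by move/levN; rewrite !opprK. Qed.

Lemma lev_subr0 a b : lev a b -> lev 0 (b - a).
Proof. by move=> ab; have := vle_add (- a) ab; rewrite subrr. Qed.

Lemma lev_subr0' a b : lev 0 (b - a) -> lev a b.
Proof. by move=> ab; have := vle_add a ab; rewrite add0r subrK. Qed.

Lemma levB a b c : lev a b -> lev (a - c) (b - c).
Proof. exact: vle_add. Qed.

Lemma vjC a b : vj a b = vj b a.
Proof.
by apply: vle_anti; apply: vjoin_lub; (apply: vjoin_ubl || apply: vjoin_ubr).
Qed.

Lemma vjE a b : lev a b -> vj a b = b.
Proof.
move=> ab; apply: vle_anti; last exact: vjoin_ubr.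
by apply: vjoin_lub => //; apply: vle_refl.
Qed.

Lemma half_vec (v : X) : (2^-1 : R) *: (v + v) = v.
Proof.
have -> : v + v = (2%:R : R) *: v by rewrite scaler_nat mulr2n.
by rewrite scalerA mulVf ?scale1r // pnatr_eq0.
Qed.

Lemma lev_half v : lev 0 (v + v) -> lev 0 v.
Proof.
move=> h; have := vle_scale (a:=2^-1) _ h.
by rewrite scaler0 half_vec; apply; rewrite invr_ge0 ler0n.
Qed.

Lemma vjEl a b : lev b a -> vj a b = a.
Proof. by move=> ba; rewrite vjC vjE. Qed.

Lemma vabs_ge0 a : lev 0 (vabs a).
Proof.
have h1 : lev a (vabs a) by apply: vjoin_ubl.
have h2 : lev (- a) (vabs a) by apply: vjoin_ubr.
by have := levD h1 h2; rewrite subrr; apply: lev_half.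
Qed.

Lemma vabs_id a : vabs (vabs a) = vabs a.
Proof.
apply: vjEl; apply: (lev_trans _ (vabs_ge0 a)).
by have := levN (vabs_ge0 a); rewrite oppr0.
Qed.

Lemma norm_vabs a : `|vabs a| = `|a|.
Proof.
apply/eqP; rewrite eq_le; apply/andP; split.
  apply: (@vnorm_mono _ _ L (vabs a) a).
  by change (lev (vabs (vabs a)) (vabs a)); rewrite vabs_id; apply: vle_refl.
apply: (@vnorm_mono _ _ L a (vabs a)).
by change (lev (vabs a) (vabs (vabs a))); rewrite vabs_id; apply: vle_refl.
Qed.

Lemma sandwich v c : lev (- c) v -> lev v c -> `|v| <= `|c|.
Proof.
move=> h1 h2; apply: (@vnorm_mono _ _ L v c).
have cc : lev (- c) c by apply: lev_trans h1 h2.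
rewrite [X in lev _ X]vjEl //; apply: vjoin_lub => //.
by apply: levNr; rewrite opprK.
Qed.

Lemma sandwich2 a v b : lev a v -> lev v b -> `|v| <= `|a| + `|b|.
Proof.
move=> h1 h2; rewrite -(norm_vabs a) -(norm_vabs b).
have pa := vabs_ge0 a; have pb := vabs_ge0 b.
apply: (le_trans _ (ler_normD _ _)); apply: sandwich.
  apply: (lev_trans _ h1); rewrite opprD.
  have : lev (- vabs a) a by apply: levNr; rewrite opprK; apply: vjoin_ubr.
  move=> h; have := levD h (levN pb); rewrite oppr0 addr0; exact.
have hb : lev b (vabs b) by apply: vjoin_ubl.
have := levD hb pa; rewrite addr0 (addrC (vabs b)) => h; exact: lev_trans h2 h.
Qed.

Lemma vabsN a : vabs (- a) = vabs a.
Proof. by rewrite /vabs opprK vjC. Qed.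

Lemma pos_diff a b : lev (vj a 0 - vj b 0) (vabs (a - b)).
Proof.
have h : lev (vj a 0) (vj (a - b) 0 + vj b 0).
  apply: vjoin_lub.
    rewrite -{1}(subrK b a); apply: levD; exact: vjoin_ubl.
  by have := levD (vjoin_ubr L (a - b) 0) (vjoin_ubr L b 0); rewrite addr0.
have h' : lev (vj (a - b) 0) (vabs (a - b)).
  by apply: vjoin_lub; [apply: vjoin_ubl | apply: vabs_ge0].
have := levB (vj b 0) h; rewrite addrK => h2.
exact: lev_trans h2 h'.
Qed.

Lemma norm_pos_diff a b : `|vj a 0 - vj b 0| <= `|a - b|.
Proof.
rewrite -(norm_vabs (a - b)); apply: sandwich; last exact: pos_diff.
have := pos_diff b a; rewrite -vabsN opprB => h.
by apply: levNr; rewrite opprK opprB.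
Qed.

Lemma closed_cone v : (forall e : R, 0 < e -> exists w, lev 0 w /\ `|v - w| < e) ->
  lev 0 v.
Proof.
move=> H.
suff : vj (- v) 0 = 0.
  move=> e; have : lev (- v) 0 by rewrite -e; apply: vjoin_ubl.
  by move/levN; rewrite opprK oppr0.
apply/eqP; rewrite -normr_le0; apply/ler_addgt0Pr => e e0.
have [w [w0 hw]] := H e e0.
have hw0 : vj (- w) 0 = 0.
  apply: vjE; by have := levN w0; rewrite oppr0.
have := norm_pos_diff (- v) (- w); rewrite hw0 subr0 opprK addrC -opprB normrN.
by move=> h; rewrite add0r; apply: ltW; apply: le_lt_trans h hw.
Qed.

End Lat.
Set Implicit Arguments. Unset Strict Implicit. Unset Printing Implicit Defensive.

Section Conv.
Variables (R : realType) (X : completeNormedModType R) (L : banach_lattice X).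
Local Notation lev := (vle L).
Variables (T : X -> X) (hT : convex_op L T) (x y : X).

Let phi (h : R) := T (x + h *: y).
Definition slope (h : R) : X := h^-1 *: (T (x + h *: y) - T x).

Lemma phi0 : phi 0 = T x.
Proof. by rewrite /phi scale0r addr0. Qed.

Lemma phi_conv a b l : 0 <= l <= 1 ->
  lev (phi (l * a + (1 - l) * b)) (l *: phi a + (1 - l) *: phi b).
Proof.
move=> hl; have := hT (x + a *: y) (x + b *: y) hl.
suff -> : l *: (x + a *: y) + (1 - l) *: (x + b *: y) = x + (l * a + (1 - l) * b) *: y by [].
rewrite !scalerDr !scalerA addrACA -scalerDl subrKC scale1r scalerDl //.
Qed.

Lemma slope_mono h1 h2 : 0 < h1 -> h1 <= h2 -> lev (slope h1) (slope h2).
Proof.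
move=> h10 h12; have h20 : 0 < h2 by apply: lt_le_trans h12.
set l := h1 / h2.
have hl : 0 <= l <= 1.
  by apply/andP; split; [rewrite /l divr_ge0 // ltW | rewrite /l ler_pdivrMr // mul1r].
have := phi_conv h2 0 hl.
have -> : l * h2 + (1 - l) * 0 = h1 by rewrite mulr0 addr0 /l divfK // gt_eqF.
rewrite phi0 => /(levB (T x)).
have -> : l *: phi h2 + (1 - l) *: T x - T x = l *: (phi h2 - T x).
  by rewrite scalerBl scalerBr scale1r addrCA (addrC (T x)) addrK.
move=> /(vle_scale (a := h1^-1)) H.
have {H} := H _; rewrite invr_ge0 (ltW h10) scalerA => /(_ isT).
have -> : h1^-1 * l = h2^-1 by rewrite /l mulrA mulVf ?mul1r // gt_eqF.
by [].
Qed.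
Lemma slope_negpos h k : 0 < h -> 0 < k -> lev (slope (- k)) (slope h).
Proof.
move=> h0 k0; have hk0 : 0 < h + k by rewrite addr_gt0.
set l := h / (h + k).
have hl : 0 <= l <= 1.
  apply/andP; split; first by rewrite /l divr_ge0 // ltW.
  by rewrite /l ler_pdivrMr // mul1r lerDl ltW.
have := phi_conv (- k) h hl.
have -> : l * - k + (1 - l) * h = 0.
  rewrite /l; field; by rewrite gt_eqF.
rewrite phi0 => /lev_subr0.
set A := phi (- k) - T x; set B := phi h - T x.
have -> : l *: phi (- k) + (1 - l) *: phi h - T x = l *: A + (1 - l) *: B.
  by rewrite /A /B !scalerBr addrACA -opprD -scalerDl subrKC scale1r.
move=> /(vle_scale (a := (h + k) / (h * k))) H.
have {H} := H _; rewrite scaler0 divr_ge0 ?ltW ?mulr_gt0 // => /(_ isT).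
rewrite scalerDr !scalerA.
have -> : (h + k) / (h * k) * l = k^-1 by rewrite /l; field; rewrite !gt_eqF.
have -> : (h + k) / (h * k) * (1 - l) = h^-1 by rewrite /l; field; rewrite !gt_eqF.
move=> H; apply: lev_subr0'.
suff -> : slope h - slope (- k) = k^-1 *: A + h^-1 *: B by [].
by rewrite /slope /A /B invrN scaleNr opprK addrC.
Qed.
End Conv.

Section Lip.
Variables (R : realType) (X : completeNormedModType R) (L : banach_lattice X).
Local Notation lev := (vle L).

Lemma slopeN (T : X -> X) a w h : slope T a w (- h) = - slope T a (- w) h.
Proof. by rewrite /slope invrN scaleNr scalerN scaleNr. Qed.

Lemma conv_lip (T : X -> X) (hT : convex_op L T) z (rho M : R) : 0 < rho ->
  (forall u, `|u - z| <= rho + rho -> `|T u| <= M) ->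
  forall a w, `|a - z| <= rho -> `|w| <= rho ->
  `|T (a + w) - T a| <= (M *+ 4) / rho * `|w|.
Proof.
move=> r0 HM a w az wr.
have [->|w0] := eqVneq w 0; first by rewrite addr0 subrr !normr0 mulr0.
have nw0 : 0 < `|w| by rewrite normr_gt0.
set lam := `|w| / rho.
have l0 : 0 < lam by rewrite divr_gt0.
have l1 : lam <= 1 by rewrite ler_pdivrMr // mul1r.
set w' := lam^-1 *: w.
have ww : lam *: w' = w by rewrite /w' scalerA mulfV ?scale1r // gt_eqF.
have nw' : `|w'| = rho.
  rewrite /w' normrZ normfV /lam normrM normfV !gtr0_norm //.
  by rewrite invfM invrK mulrC mulrA mulfV ?mul1r // gt_eqF.
have HMa : `|T a| <= M by apply: HM; apply: le_trans az _; rewrite lerDl ltW.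
have HM1 : `|T (a + w') - T a| <= M + M.
  apply: le_trans (ler_normB _ _) _; apply: lerD => //; apply: HM.
  by rewrite addrAC; apply: le_trans (ler_normD _ _) _; rewrite nw' lerD.
have HM2 : `|T (a + (- w')) - T a| <= M + M.
  apply: le_trans (ler_normB _ _) _; apply: lerD => //; apply: HM.
  by rewrite addrAC; apply: le_trans (ler_normD _ _) _; rewrite normrN nw' lerD.
have e1 := slope_mono hT a w' l0 l1.
have e2 := slope_mono hT a (- w') l0 l1.
have e3 := slope_negpos hT a w' l0 l0.
rewrite slopeN in e3.
have : lev (- slope T a (- w') 1) (slope T a w' lam).
  by apply: lev_trans e3; apply: levN.
move=> /sandwich2 /(_ e1).
rewrite normrN /slope invr1 !scale1r ww normrZ => H.
have := ler_wpM2l (ltW l0) H.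
rewrite normfV gtr0_norm // mulrA mulfV ?mul1r ?gt_eqF // => H'.
apply: le_trans H' _.
have H4 : `|T (a - w') - T a| + `|T (a + w') - T a| <= M *+ 4.
  by apply: le_trans (lerD HM2 HM1) _; rewrite -!mulr2n -mulrnA.
apply: le_trans (ler_wpM2l (ltW l0) H4) _.
suff -> : lam * (M *+ 4) = M *+ 4 / rho * `|w| by [].
by rewrite /lam; ring.
Qed.
End Lip.
Set Implicit Arguments. Unset Strict Implicit. Unset Printing Implicit Defensive.

Section NearR.
Variable (R : realType).
Lemma near_right0 (P : R -> Prop) : (\forall h \near 0^'+, P h) ->
  exists2 d : R, 0 < d & forall h, 0 < h -> h < d -> P h.
Proof.
move=> [d /= d0 H]; exists d => // h h0 hd; apply: H => //=.
by rewrite sub0r normrN gtr0_norm.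
Qed.
End NearR.

Section Inf.
Variables (R : realType) (X : completeNormedModType R) (L : banach_lattice X).
Local Notation lev := (vle L).
Local Notation vj := (vjoin L).

Lemma archi_zero (w c : R) : 0 <= w -> (forall n : nat, w *+ n <= c) -> w = 0.
Proof.
move=> w0 H; apply/eqP; rewrite eq_le w0 andbT; apply/negP => /negP.
rewrite -ltNge => wp.
have := H (Num.truncn (c / w)).+1; rewrite -mulr_natr.
have := truncnS_gt (c / w); rewrite ltr_pdivrMr // mulrC => h1 h2.
by have := lt_le_trans h1 h2; rewrite ltxx.
Qed.

Variables (oc : order_continuous L) (D : R -> X).
Hypothesis mono : forall h1 h2, 0 < h1 -> h1 <= h2 -> lev (D h1) (D h2).
Definition LB (l : X) := forall h, 0 < h -> lev l (D h).
Hypothesis lb : exists l, LB l.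

Definition Iidx := {p : R * X | (0 < p.1) /\ LB p.2}.
Definition leI (i j : Iidx) := (sval j).1 <= (sval i).1 /\ lev (sval i).2 (sval j).2.
Definition xI (i : Iidx) := D (sval i).1 - (sval i).2.

Lemma LB_join l1 l2 : LB l1 -> LB l2 -> LB (vj l1 l2).
Proof. by move=> h1 h2 h h0; apply: vjoin_lub; [apply: h1 | apply: h2]. Qed.

Lemma inf_xI : is_inf L (range xI) 0.
Proof.
split.
  move=> _ [[[h l] [h0 hl]] _ <-]; rewrite /xI /=.
  by apply: lev_subr0; apply: hl.
move=> w Hw.
have [l0 hl0] := lb.
set w' := vj w 0.
have w'lb : forall i, lev w' (xI i).
  move=> i; apply: vjoin_lub; first by apply: Hw; exists i.
  case: i => [[h l] [h0 hl]]; rewrite /xI /=.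
  by apply: lev_subr0; apply: hl.
have w'0 : lev 0 w' by apply: vjoin_ubr.
have LBn : forall n : nat, LB (l0 + w' *+ n).
  elim=> [|n IH]; first by rewrite mulr0n addr0.
  move=> h h0; rewrite mulrSr addrA.
  have := w'lb (exist _ (h, l0 + w' *+ n) (conj h0 IH)); rewrite /xI /=.
  move=> /(vle_add (l0 + w' *+ n)); rewrite subrK addrC; exact.
have npos : forall n : nat, lev 0 (w' *+ n).
  by move=> n; have := vle_scale (a := n%:R) (ler0n _ _) w'0; rewrite scaler0 scaler_nat.
have nb : forall n : nat, `|w'| *+ n <= `|D 1 - l0|.
  move=> n; rewrite -normrMn; apply: sandwich.
    apply: lev_trans (npos n); apply: levNr; rewrite opprK oppr0.
    by apply: lev_subr0; apply: hl0.
  have := LBn n 1 ltr01; move=> /(vle_add (- l0)).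
  by rewrite addrC addKr.
have : `|w'| = 0 by apply: archi_zero nb.
move=> /normr0_eq0 e.
by have := vjoin_ubl L w 0; rewrite -/w' e.
Qed.

Lemma oc_step e : 0 < e -> exists h0 l0, [/\ 0 < h0, LB l0 &
  forall h, 0 < h -> h <= h0 -> `|D h - l0| < e].
Proof.
move=> e0.
have ne : exists i : Iidx, True.
  have [l hl] := lb; by exists (exist _ (1, l) (conj ltr01 hl)).
have refl : forall i, leI i i by move=> i; split; [apply: lexx | apply: vle_refl].
have trans : forall i j k, leI i j -> leI j k -> leI i k.
  move=> i j k [h1 h2] [h3 h4]; split; [exact: le_trans h3 h1 | exact: vle_trans h2 h4].
have dir : forall i j, exists k, leI i k /\ leI j k.
  move=> [[hi li] [hi0 hli]] [[hj lj] [hj0 hlj]].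
  have hk0 : 0 < Order.min hi hj by rewrite lt_min hi0 hj0.
  exists (exist _ (Order.min hi hj, vj li lj) (conj hk0 (LB_join hli hlj))).
  rewrite /leI /=; split; split; rewrite ?ge_min ?lexx ?orbT //.
  - exact: vjoin_ubl.
  - exact: vjoin_ubr.
have dec : forall i j, leI i j -> lev (xI j) (xI i).
  move=> [[hi li] [hi0 hli]] [[hj lj] [hj0 hlj]] [/= h1 h2]; rewrite /xI /=.
  by apply: levD; [apply: mono | apply: levN].
have [[[h0 l0] [h00 hl0]] H] := oc ne refl trans dir dec inf_xI e0.
exists h0, l0; split => // h hp hh.
have := H (exist _ (h, l0) (conj hp hl0)); rewrite /xI /=; apply.
by split => //=; apply: vle_refl.
Qed.

Lemma cauchy_step e : 0 < e -> exists2 h0, 0 < h0 &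
  forall h1 h2, 0 < h1 -> h1 <= h2 -> h2 <= h0 -> `|D h2 - D h1| < e.
Proof.
move=> e0; have [h0 [l0 [h00 hl0 H]]] := oc_step e0.
exists h0 => // h1 h2 h10 h12 h20.
have h2p : 0 < h2 by apply: lt_le_trans h12.
apply: le_lt_trans (H _ h2p h20); apply: sandwich.
  apply: (@lev_trans _ _ _ _ 0).
    by apply: levNr; rewrite opprK oppr0; apply: lev_subr0; apply: hl0.
  by apply: lev_subr0; apply: mono.
by apply: levD; [apply: vle_refl | apply: levN; apply: hl0].
Qed.

Lemma inf_exists : exists z, is_inf L (D @` [set h | 0 < h]) z /\
  forall e, 0 < e -> exists2 d, 0 < d & forall h, 0 < h -> h <= d -> `|D h - z| < e.
Proof.
have cF : cauchy (D @ 0^'+).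
  apply: cauchy_exP => eps eps0.
  have [h0 h00 Hc] := cauchy_step eps0.
  exists (D h0); exists h0 => //= h; rewrite /ball_ /= sub0r normrN => hh hp.
  rewrite -ball_normE /ball_ /=.
  by apply: Hc => //; apply: ltW; apply: le_lt_trans (ler_norm h) hh.
have /cauchy_cvgP cv := cF.
set z := lim (D @ 0^'+).
have near_z : forall e, 0 < e -> exists2 d, 0 < d & forall h, 0 < h -> h < d -> `|z - D h| < e.
  move=> e e0; apply: near_right0.
  by move/cvgrPdist_lt: cv => /(_ e e0).
have lbz : forall h, 0 < h -> lev z (D h).
  move=> h hp; apply: lev_subr0'; apply: closed_cone => e e0.
  have [d d0 Hd] := near_z e e0.
  set h' := Order.min h d / 2.
  have hm0 : 0 < Order.min h d by rewrite lt_min hp d0.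
  have h'0 : 0 < h' by rewrite divr_gt0.
  have h'm : h' < Order.min h d by rewrite ltr_pdivrMr // ltr_pMr // ltr1n.
  exists (D h - D h'); split.
    apply: lev_subr0; apply: mono => //; apply: ltW; apply: lt_le_trans h'm _.
    by rewrite ge_min lexx.
  rewrite opprB addrC addrA subrK distrC.
  by apply: Hd => //; apply: lt_le_trans h'm _; rewrite ge_min lexx orbT.
have glbz : forall l, LB l -> lev l z.
  move=> l hl; apply: lev_subr0'; apply: closed_cone => e e0.
  have [d d0 Hd] := near_z e e0.
  have d20 : 0 < d / 2 by rewrite divr_gt0.
  exists (D (d / 2) - l); split; first by apply: lev_subr0; apply: hl.
  rewrite opprB addrA subrK.
  by apply: Hd => //; rewrite ltr_pdivrMr // ltr_pMr // ltr1n.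
exists z; split.
  split; first by move=> _ [h hp <-]; apply: lbz.
  by move=> w Hw; apply: glbz => h hp; apply: Hw; exists h.
move=> e e0; have [h0 [l0 [h00 hl0 H]]] := oc_step e0.
exists h0 => // h hp hh; apply: le_lt_trans (H h hp hh); apply: sandwich.
  apply: (@lev_trans _ _ _ _ 0).
    by apply: levNr; rewrite opprK oppr0; apply: lev_subr0; apply: hl0.
  by apply: lev_subr0; apply: lbz.
by apply: levD; [apply: vle_refl | apply: levN; apply: glbz].
Qed.
End Inf.
Set Implicit Arguments. Unset Strict Implicit. Unset Printing Implicit Defensive.

Section Der.
Variables (R : realType) (X : completeNormedModType R) (L : banach_lattice X).
Local Notation lev := (vle L).
Variables (oc : order_continuous L) (T : X -> X) (hT : convex_op L T).

Lemma inf_uniq (A : set X) z1 z2 : is_inf L A z1 -> is_inf L A z2 -> z1 = z2.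
Proof. by move=> [h1 g1] [h2 g2]; apply: vle_anti; [apply: g2 | apply: g1]. Qed.

Lemma sup_uniq (A : set X) z1 z2 : is_sup L A z1 -> is_sup L A z2 -> z1 = z2.
Proof. by move=> [h1 g1] [h2 g2]; apply: vle_anti; [apply: g1 | apply: g2]. Qed.

Definition Aplus x y := [set h^-1 *: (T (x + h *: y) - T x) | h in [set h : R | 0 < h]].
Definition Aminus x y := [set h^-1 *: (T (x + h *: y) - T x) | h in [set h : R | h < 0]].

Lemma plus_spec x y : exists z, is_inf L (Aplus x y) z /\
  forall e, 0 < e -> exists2 d, 0 < d & forall h, 0 < h -> h <= d ->
    `|slope T x y h - z| < e.
Proof.
have mono := slope_mono hT x y.
have lb : exists l, LB L (slope T x y) l.
  by exists (slope T x y (-1)) => h hp; apply: slope_negpos.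
have [z [hz cz]] := inf_exists oc mono lb.
by exists z; split.
Qed.

Lemma minus_spec x y : exists z, is_sup L (Aminus x y) z /\
  forall e, 0 < e -> exists2 d, 0 < d & forall h, 0 < h -> h <= d ->
    `|slope T x y (- h) - z| < e.
Proof.
have [z [[zl zg] cz]] := plus_spec x (- y).
exists (- z); split; last first.
  move=> e e0; have [d d0 Hd] := cz e e0; exists d => // h hp hd.
  by rewrite slopeN -opprD normrN; apply: Hd.
split.
  move=> _ [h hn <-].
  have -> : h^-1 *: (T (x + h *: y) - T x) = - slope T x (- y) (- h).
    by rewrite -slopeN opprK.
  apply: levN; apply: zl; exists (- h); first by rewrite /= oppr_gt0.
  by [].
move=> w Hw; apply: levNr; rewrite opprK; apply: zg.
move=> _ [h hp <-].
have : lev (slope T x y (- h)) w by apply: Hw; exists (- h); rewrite //= oppr_lt0.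
rewrite slopeN => /levN; rewrite opprK; exact.
Qed.
End Der.
Set Implicit Arguments. Unset Strict Implicit. Unset Printing Implicit Defensive.

Section Semi.
Variables (R : realType) (X : completeNormedModType R) (L : banach_lattice X).
Local Notation lev := (vle L).
Variables (S : R -> X -> X).
Hypothesis hconv : forall t, 0 <= t -> convex_op L (S t).
Hypothesis hbdd : forall t, 0 <= t -> bounded_op (S t).
Hypothesis hS0 : S 0 = id.
Hypothesis hadd : forall t s, 0 <= t -> 0 <= s -> S (t + s) = S t \o S s.
Hypothesis hcont : forall x, S t x @[t --> 0^'+] --> x.

Lemma conv_lipK (T : X -> X) (hT : convex_op L T) (hB : bounded_op T) z :
  exists2 rho, 0 < rho & exists2 K, 0 < K &
    forall u, `|u - z| <= rho -> `|T u - T z| <= K * `|u - z|.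
Proof.
have r0 : 0 < `|z| + 2 by rewrite ltr_wpDl.
have [M HM] := hB _ r0.
exists 1 => //; exists (`|M *+ 4 / 1| + 1); first by rewrite ltr_wpDl.
move=> u hu.
have HM' : forall v, `|v - z| <= 1 + 1 -> `|T v| <= M.
  move=> v hv; apply: HM.
  rewrite -(subrK z v); apply: le_trans (ler_normD _ _) _.
  by rewrite addrC lerD.
have hz : `|z - z| <= 1 by rewrite subrr normr0 ler01.
have := conv_lip hT ltr01 HM' hz hu.
rewrite subrKC => H; apply: le_trans H _; apply: ler_wpM2r => //.
by apply: le_trans (ler_norm _) _; rewrite lerDl.
Qed.
Lemma lipK_cont (T : X -> X) :
  (forall z, exists2 rho, 0 < rho & exists2 K, 0 < K &
    forall u, `|u - z| <= rho -> `|T u - T z| <= K * `|u - z|) -> continuous T.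
Proof.
move=> H z; have [rho r0 [K K0 HK]] := H z.
apply/cvgrPdist_lt => e e0.
have d0 : 0 < Order.min rho (e / K) by rewrite lt_min r0 divr_gt0.
apply/nbhs_ballP; exists (Order.min rho (e / K)) => //= u; rewrite -ball_normE /ball_ /= distrC => hu.
rewrite distrC; apply: le_lt_trans (HK u _) _.
  by apply: ltW; apply: lt_le_trans hu _; rewrite ge_min lexx.
rewrite -ltr_pdivlMl // mulrC; apply: lt_le_trans hu _.
by rewrite ge_min lexx orbT.
Qed.

Lemma S_cont t : 0 <= t -> continuous (S t).
Proof. by move=> t0; apply: lipK_cont => z; apply: conv_lipK; [apply: hconv | apply: hbdd]. Qed.
Lemma cont0 w e : 0 < e -> exists2 d, 0 < d &
  forall r, 0 <= r -> r < d -> `|S r w - w| < e.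
Proof.
move=> e0; have := @hcont w; move/cvgrPdist_lt => /(_ e e0) /near_right0 [d d0 Hd].
exists d => // r; rewrite le_eqVlt => /orP [/eqP <-|rp] rd.
  by rewrite hS0 subrr normr0.
by rewrite distrC; apply: Hd.
Qed.

Lemma right_cont t z e : 0 <= t -> 0 < e -> exists2 d, 0 < d &
  forall r, 0 <= r -> r < d -> `|S (t + r) z - S t z| < e.
Proof.
move=> t0 e0; have [rho r0 [K K0 HK]] := conv_lipK (hconv t0) (hbdd t0) z.
have ee0 : 0 < Order.min rho (e / K) by rewrite lt_min r0 divr_gt0.
have [d d0 Hd] := cont0 z ee0.
exists d => // r r0' rd; rewrite hadd //=.
have h := Hd r r0' rd.
apply: le_lt_trans (HK _ _) _.
  by apply: ltW; apply: lt_le_trans h _; rewrite ge_min lexx.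
rewrite -ltr_pdivlMl // mulrC; apply: lt_le_trans h _.
by rewrite ge_min lexx orbT.
Qed.
Lemma two_half (v : X) : (2 : R) *: ((2^-1 : R) *: v) = v.
Proof. by rewrite scalerA mulfV ?scale1r // pnatr_eq0. Qed.

Lemma two_vec (v : X) : (2 : R) *: v = v + v.
Proof. by rewrite scaler_nat mulr2n. Qed.

Lemma conv_half (T : X -> X) (hT : convex_op L T) a b :
  lev (T ((2^-1 : R) *: (a + b))) ((2^-1 : R) *: (T a + T b)).
Proof.
have hl : 0 <= (2^-1 : R) <= 1.
  by apply/andP; split; [rewrite invr_ge0 ler0n | rewrite invf_le1 ?ler1n ?ltr0n].
have := hT _ a b hl.
have -> : 1 - (2^-1 : R) = 2^-1 by field.
by rewrite !scalerDr.
Qed.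

Lemma lower_mid v a c d : lev v ((2^-1 : R) *: (a + c)) -> lev c d -> lev (v + v - d) a.
Proof.
move=> h0 cd; have := vle_scale (ler0n R 2) h0; rewrite two_half two_vec => h.
apply: lev_trans (levD (vle_refl L (v + v)) (levN cd)) _.
have := levB c h; rewrite addrK; exact.
Qed.
Lemma baire_ball (T : nat -> X -> X) : (forall k, continuous (T k)) ->
  (forall w, exists C, forall k, `|T k w| <= C) ->
  exists n : nat, exists x0, exists2 r : R, 0 < r &
    forall k u, ball x0 r u -> `|T k u| <= n%:R.
Proof.
move=> Tc BoundedF.
set O := fun n : nat => \bigcup_(k in setT) (Num.norm \o T k) @^-1` [set y | y > n%:R].
have O_open : forall n, open (O n).
  move=> n; apply: bigcup_open => i _.
  apply: (@open_comp _ _ (Num.norm \o T i) [set y | y > n%:R]); last exact: open_gt.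
  by move=> x _; apply: continuous_comp; [exact: Tc | exact: norm_continuous].
set O_inf := \bigcap_i (O i).
have O_infempty : O_inf = set0.
  rewrite -subset0 => x.
  have [M FxM] := BoundedF x; rewrite /O_inf /O /=.
  move=> /(_ (Num.truncn M).+1 Logic.I)[f _]; apply/negP; rewrite -leNgt.
  by apply/ltW; rewrite -truncn_le_nat le_truncn ?FxM.
have ContraBaire : exists i, not (dense (O i)).
  have dOinf : ~ dense O_inf.
    rewrite /dense O_infempty ; apply /existsNP; exists setT; elim.
    - by move=> x; rewrite setI0.
    - by exists 0.
    - exact: openT.
  have /contra_not/(_ dOinf) :
      (forall i, open (O i) /\ dense (O i)) -> dense (O_inf).
    exact: Baire.
  move=> /asboolPn /existsp_asboolPn[n /and_asboolP /nandP Hn].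
  by exists n; case: Hn => /asboolPn.
have [n [x0 [r H]]] :
    exists n x (r : {posnum R}), (ball x r%:num) `<=` (~` (O n)).
  move: ContraBaire =>
  [i /(denseNE) [ O0 [ [ x /open_nbhs_nbhs /nbhs_ballP [r r0 bxr]
   /((@subsetI_eq0 _ (ball x r) O0 (O i) (O i)))]]]] /(_ bxr) bxrOi.
  by exists i, x, (PosNum r0); apply/disjoints_subset/bxrOi.
exists n, x0, r%:num => // k u /H.
rewrite leNgt; rewrite /O setC_bigcup /= => /(_ k Logic.I)/negP; exact.
Qed.
Lemma norm_half_sum (a b : X) (A B : R) : `|a| <= A -> `|b| <= B ->
  `|(2^-1 : R) *: (a + b)| <= 2^-1 * (A + B).
Proof.
move=> ha hb; rewrite normrZ ger0_norm ?invr_ge0 ?ler0n //.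
by apply: ler_wpM2l; [rewrite invr_ge0 ler0n | apply: le_trans (ler_normD _ _) (lerD ha hb)].
Qed.

Lemma ubp (T : nat -> X -> X) : (forall k, convex_op L (T k)) ->
  (forall k, continuous (T k)) ->
  (forall w, exists C, forall k, `|T k w| <= C) ->
  forall z, exists2 rho, 0 < rho & exists M, forall k u, `|u - z| <= rho -> `|T k u| <= M.
Proof.
move=> Tconv Tc Tb z.
have [n [x0 [r r0 Hb]]] := baire_ball Tc Tb.
set p := z + z - x0.
have [Z HZ] := Tb z; have [P HP] := Tb p.
have r4 : 0 < r / 4 by rewrite divr_gt0.
exists (r / 4) => //; exists (Z + Z + 2^-1 * (n%:R + P) + 2^-1 * (n%:R + P)).
move=> k u hu.
have inball : forall v, `|v - z| <= r / 4 -> ball x0 r (v + v - p).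
  move=> v hv; rewrite -ball_normE /ball_ /= distrC.
  have -> : v + v - p - x0 = (2 : R) *: (v - z).
    by rewrite two_vec /p opprB -addrA (addrAC x0) subrr add0r opprD addrACA.
  rewrite normrZ ger0_norm ?ler0n //; apply: le_lt_trans (ler_wpM2l (ler0n _ 2) hv) _.
  have -> : 2 * (r / 4) = r / 2 by field.
  by rewrite ltr_pdivrMr ?ltr0n // ltr_pMr // ltr1n.
have midv : forall v, v = (2^-1 : R) *: ((v + v - p) + p).
  by move=> v; rewrite subrK half_vec.
set u' := z + z - u.
have hu' : `|u' - z| <= r / 4 by rewrite /u' addrAC addrK distrC.
have up : lev (T k u) ((2^-1 : R) *: (T k (u + u - p) + T k p)).
  by rewrite {1}(midv u); apply: conv_half.
have up' : lev (T k u') ((2^-1 : R) *: (T k (u' + u' - p) + T k p)).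
  by rewrite {1}(midv u'); apply: conv_half.
have mid : lev (T k z) ((2^-1 : R) *: (T k u + T k u')).
  have -> : z = (2^-1 : R) *: (u + u') by rewrite /u' addrC subrK half_vec.
  exact: conv_half.
have low := lower_mid mid up'.
apply: le_trans (sandwich2 low up) _.
have nb1 := Hb k _ (inball u hu); have nb2 := Hb k _ (inball u' hu').
apply: lerD; last exact: (norm_half_sum nb1 (HP k)).
apply: le_trans (ler_normB _ _) _; apply: lerD; last exact: (norm_half_sum nb2 (HP k)).
by apply: le_trans (ler_normD _ _) _; apply: lerD.
Qed.
Lemma fin_bound (g : nat -> R) (K : nat) : exists C, forall k, (k < K)%N -> g k <= C.
Proof.
elim: K => [|K [C HC]]; first by exists 0.
exists (Num.max C (g K)) => k; rewrite ltnS leq_eqVlt => /orP [/eqP ->|kK].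
  by rewrite le_max lexx orbT.
by rewrite le_max HC.
Qed.

Lemma loc_unif z : exists2 d, 0 < d & exists2 rho, 0 < rho & exists M,
  forall tau u, 0 <= tau -> tau <= d -> `|u - z| <= rho -> `|S tau u| <= M.
Proof.
apply: contrapT => Hn.
have H : forall k : nat, exists q : R * X, [/\ 0 <= q.1, q.1 <= k.+1%:R^-1,
    `|q.2 - z| <= k.+1%:R^-1 & k%:R < `|S q.1 q.2|].
  move=> k; apply: contrapT => Hk; apply: Hn.
  have kp : 0 < k.+1%:R^-1 :> R by rewrite invr_gt0 ltr0n.
  exists k.+1%:R^-1 => //; exists k.+1%:R^-1 => //; exists k%:R => tau u t0 td ud.
  rewrite leNgt; apply/negP => hlt; apply: Hk; by exists (tau, u); split.
have [f Hf] := choice H.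
set T := fun k => S (f k).1.
have Tconv : forall k, convex_op L (T k) by move=> k; have [] := Hf k; move=> *; apply: hconv.
have Tc : forall k, continuous (T k) by move=> k; have [] := Hf k; move=> *; apply: S_cont.
have Tb : forall w, exists C, forall k, `|T k w| <= C.
  move=> w; have [d d0 Hd] := cont0 w ltr01.
  have [C HC] := fin_bound (fun k => `|T k w|) (Num.truncn d^-1).
  exists (Num.max C (`|w| + 1)) => k.
  case: (ltnP k (Num.truncn d^-1)) => hk; first by rewrite le_max HC.
  have [f0 f1 _ _] := Hf k.
  have fd : (f k).1 < d.
    apply: le_lt_trans f1 _; rewrite invf_plt ?posrE ?ltr0n //.
    apply: lt_le_trans (truncnS_gt _) _; by rewrite ler_nat ltnS.
  have := Hd _ f0 fd => h; rewrite le_max; apply/orP; right.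
  rewrite -(subrK w (T k w)); apply: le_trans (ler_normD _ _) _.
  by rewrite addrC lerD // ltW.
have [rho r0 [M HM]] := ubp Tconv Tc Tb z.
set k := (Num.truncn (`|M| + rho^-1)).+1.
have hk : `|M| + rho^-1 < k%:R by apply: truncnS_gt.
have [_ _ f2 f3] := Hf k.
have : `|T k (f k).2| <= M.
  apply: HM; apply: le_trans f2 _; rewrite invf_ple ?posrE ?ltr0n //.
  apply: ltW; apply: (le_lt_trans (ler_wpDl (normr_ge0 M) (lexx _))).
  by apply: lt_le_trans hk _; rewrite ler_nat.
move=> hM.
have : M < k%:R.
  apply: le_lt_trans hk; apply: le_trans (ler_norm M) _.
  by rewrite lerDl invr_ge0 ltW.
move=> h; have := lt_trans (le_lt_trans hM h) f3.
by rewrite ltxx.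
Qed.
Lemma left_cont t z e : 0 < t -> 0 < e -> exists2 d, 0 < d &
  forall r, 0 <= r -> r < d -> `|S (t - r) z - S t z| < e.
Proof.
move=> t0 e0.
have [dd dd0 [rho rho0 [M HM]]] := loc_unif z.
set d0 := Order.min dd t.
have d00 : 0 < d0 by rewrite lt_min dd0 t0.
have d0dd : d0 <= dd by rewrite ge_min lexx.
have d0t : d0 <= t by rewrite ge_min lexx orbT.
have rho2 : 0 < rho / 2 by rewrite divr_gt0.
set K := `|M *+ 4 / (rho / 2)| + 1.
have K0 : 0 < K by rewrite ltr_wpDl.
have lipt : forall tau w, 0 <= tau -> tau <= d0 -> `|w - z| <= rho / 2 ->
    `|S tau w - S tau z| <= K * `|w - z|.
  move=> tau w ta td wz.
  have HM' : forall u, `|u - z| <= rho / 2 + rho / 2 -> `|S tau u| <= M.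
    move=> u hu; apply: HM => //; first by apply: le_trans td d0dd.
    by move: hu; rewrite -splitr.
  have hz : `|z - z| <= rho / 2 by rewrite subrr normr0 ltW.
  have := conv_lip (hconv ta) rho2 HM' hz wz; rewrite subrKC => H.
  apply: le_trans H _; apply: ler_wpM2r => //.
  by apply: le_trans (ler_norm _) _; rewrite lerDl.
set t1 := t - d0.
have t10 : 0 <= t1 by rewrite subr_ge0.
have [rho1 rho10 [K1 K10 HK1]] := conv_lipK (hconv t10) (hbdd t10) (S d0 z).
set eta := Order.min (rho / 2) (Order.min (rho1 / K) (e / (K1 * K))).
have eta0 : 0 < eta by rewrite !lt_min rho2 !divr_gt0 // mulr_gt0.
have [d d0' Hd] := cont0 z eta0.
exists (Order.min d d0); first by rewrite lt_min d0' d00.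
move=> r r0 rd.
have rd1 : r < d by move: rd; rewrite lt_min => /andP [].
have rd2 : r < d0 by move: rd; rewrite lt_min => /andP [].
set tau := d0 - r.
have tau0 : 0 <= tau by rewrite subr_ge0 ltW.
have h1 := Hd r r0 rd1.
have e1 : t - r = t1 + tau by rewrite /t1 /tau addrA subrK.
have e2 : t = t1 + d0 by rewrite /t1 subrK.
have e3 : d0 = tau + r by rewrite /tau subrK.
have d00w : 0 <= d0 := ltW d00.
rewrite e1 e2 hadd // hadd //= e3 hadd //=.
have hA : `|S tau (S r z) - S tau z| <= K * `|S r z - z|.
  apply: lipt => //; first by rewrite /tau lerBlDr lerDl.
  by apply: ltW; apply: lt_le_trans h1 _; rewrite ge_min lexx.
have hB : K * `|S r z - z| < K * eta by rewrite ltr_pM2l.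
have eta1 : eta <= rho1 / K by rewrite /eta !ge_min lexx orbT.
have eta2 : eta <= e / (K1 * K) by rewrite /eta !ge_min lexx !orbT.
have Sd : S d0 z = S tau (S r z) by rewrite e3 hadd.
rewrite Sd in HK1.
have hA' : `|S tau z - S tau (S r z)| < rho1.
  rewrite distrC; apply: le_lt_trans hA _; apply: lt_le_trans hB _.
  by rewrite -ler_pdivlMl // mulrC.
apply: le_lt_trans (HK1 _ (ltW hA')) _.
rewrite distrC; apply: le_lt_trans (ler_wpM2l (ltW K10) hA) _.
have hC : K1 * (K * `|S r z - z|) < K1 * (K * eta) by rewrite ltr_pM2l.
apply: lt_le_trans hC _.
by rewrite mulrA -ler_pdivlMl ?mulr_gt0 // mulrC.
Qed.

Lemma orbit_cont t z e : 0 <= t -> 0 < e -> exists2 d, 0 < d &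
  forall s, 0 <= s -> `|s - t| < d -> `|S s z - S t z| < e.
Proof.
move=> t0 e0; have [dR dR0 HR] := right_cont z t0 e0.
have right : forall s, t <= s -> `|s - t| < dR -> `|S s z - S t z| < e.
  move=> s ts hs; have := HR (s - t); rewrite subrKC; apply.
    by rewrite subr_ge0.
  by apply: le_lt_trans (ler_norm _) hs.
move: t0; rewrite le_eqVlt => /orP [/eqP t0|tp].
  exists dR => // s s0 hs; apply: right => //; by rewrite -t0.
have [dL dL0 HL] := left_cont z tp e0.
exists (Order.min dR dL); first by rewrite lt_min dR0 dL0.
move=> s s0; rewrite lt_min => /andP [h1 h2].
case: (leP t s) => ts; first exact: right.
have := HL (t - s); rewrite opprB subrKC; apply; first by rewrite subr_ge0 ltW.
by rewrite distrC in h2; apply: le_lt_trans (ler_norm _) h2.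
Qed.
End Semi.
Set Implicit Arguments. Unset Strict Implicit. Unset Printing Implicit Defensive.

Lemma diff4 (R : realType) (X : completeNormedModType R) (A B C D : X) :
  (A - C) - (B - D) = (A - B) - (C - D).
Proof. by rewrite !opprB addrACA [in RHS]addrACA (addrC (- C)). Qed.

Section Main.
Variables (R : realType) (X : completeNormedModType R) (L : banach_lattice X).
Local Notation lev := (vle L).
Variables (S : R -> X -> X) (oc : order_continuous L).
Hypothesis hconv : forall t, 0 <= t -> convex_op L (S t).
Hypothesis hbdd : forall t, 0 <= t -> bounded_op (S t).
Hypothesis hS0 : S 0 = id.
Hypothesis hadd : forall t s, 0 <= t -> 0 <= s -> S (t + s) = S t \o S s.
Hypothesis hcont : forall x, S t x @[t --> 0^'+] --> x.

Lemma dplus_inf s x y : 0 <= s -> is_inf L (Aplus (S s) x y) (dplus L S s x y).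
Proof.
move=> s0; have [z [hz _]] := plus_spec oc (hconv s0) x y.
by rewrite /dplus; apply: xgetPex; exists z.
Qed.

Lemma dminus_sup s x y : 0 <= s -> is_sup L (Aminus (S s) x y) (dminus L S s x y).
Proof.
move=> s0; have [z [hz _]] := minus_spec oc (hconv s0) x y.
by rewrite /dminus; apply: xgetPex; exists z.
Qed.
Lemma dplus_conv s x y e : 0 <= s -> 0 < e -> exists2 d, 0 < d &
  forall h, 0 < h -> h <= d -> `|slope (S s) x y h - dplus L S s x y| < e.
Proof.
move=> s0 e0; have [z [hz cz]] := plus_spec oc (hconv s0) x y.
by rewrite (inf_uniq (dplus_inf x y s0) hz); apply: cz.
Qed.

Lemma dminus_conv s x y e : 0 <= s -> 0 < e -> exists2 d, 0 < d &
  forall h, 0 < h -> h <= d -> `|slope (S s) x y (- h) - dminus L S s x y| < e.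
Proof.
move=> s0 e0; have [z [hz cz]] := minus_spec oc (hconv s0) x y.
by rewrite (sup_uniq (dminus_sup x y s0) hz); apply: cz.
Qed.

Lemma dplus_le s x y h : 0 <= s -> 0 < h -> lev (dplus L S s x y) (slope (S s) x y h).
Proof. by move=> s0 h0; have [lb _] := dplus_inf x y s0; apply: lb; exists h. Qed.

Lemma dminus_ge s x y h : 0 <= s -> 0 < h -> lev (slope (S s) x y (- h)) (dminus L S s x y).
Proof.
by move=> s0 h0; have [ub _] := dminus_sup x y s0; apply: ub; exists (- h); rewrite //= oppr_lt0.
Qed.

Lemma dminus_le_dplus s x y : 0 <= s -> lev (dminus L S s x y) (dplus L S s x y).
Proof.
move=> s0; have [_ g] := dminus_sup x y s0; apply: g.
move=> _ [h hn <-]; have [_ g'] := dplus_inf x y s0; apply: g'.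
move=> _ [k kp <-].
have := slope_negpos (hconv s0) x y kp (_ : 0 < - h); rewrite opprK; apply.
by rewrite oppr_gt0.
Qed.

Lemma slope_diff s t x y h : `|slope (S s) x y h - slope (S t) x y h| <=
  `|h|^-1 * (`|S s (x + h *: y) - S t (x + h *: y)| + `|S s x - S t x|).
Proof.
rewrite /slope -scalerBr normrZ normfV diff4; apply: ler_wpM2l.
  by rewrite invr_ge0.
exact: ler_normB.
Qed.
Lemma slope_cont t x y h e : 0 <= t -> h != 0 -> 0 < e -> exists2 d, 0 < d &
  forall s, 0 <= s -> `|s - t| < d -> `|slope (S s) x y h - slope (S t) x y h| < e.
Proof.
move=> t0 h0 e0.
have nh : 0 < `|h| by rewrite normr_gt0.
set eta := e * `|h| / 2.
have eta0 : 0 < eta by rewrite /eta !mulr_gt0 // invr_gt0 ltr0n.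
have [d1 d10 H1] := orbit_cont hconv hbdd hS0 hadd hcont (x + h *: y) t0 eta0.
have [d2 d20 H2] := orbit_cont hconv hbdd hS0 hadd hcont x t0 eta0.
exists (Order.min d1 d2); first by rewrite lt_min d10 d20.
move=> s s0; rewrite lt_min => /andP [hd1 hd2].
apply: le_lt_trans (slope_diff _ _ _ _ _) _.
have := ltrD (H1 s s0 hd1) (H2 s s0 hd2) => H.
rewrite -ltr_pdivlMl ?invr_gt0 // invrK; apply: lt_le_trans H _.
by rewrite /eta -splitr mulrC.
Qed.
Lemma main_cont t x y e : 0 <= t -> dplus L S t x y = dminus L S t x y -> 0 < e ->
  exists2 d, 0 < d & forall s, 0 <= s -> `|s - t| < d ->
    `|dplus L S s x y - dplus L S t x y| < e /\ `|dminus L S s x y - dminus L S t x y| < e.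
Proof.
move=> t0 eq e0.
set e' := e / 4.
have e'0 : 0 < e' by rewrite divr_gt0.
have [dp dp0 Hp] := dplus_conv x y t0 e'0.
have [dm dm0 Hm] := dminus_conv x y t0 e'0.
set h := Order.min dp dm.
have h0 : 0 < h by rewrite lt_min dp0 dm0.
have hdp : h <= dp by rewrite ge_min lexx.
have hdm : h <= dm by rewrite ge_min lexx orbT.
have hp := Hp h h0 hdp; have hm := Hm h h0 hdm.
have hn0 : h != 0 by rewrite gt_eqF.
have hn1 : - h != 0 by rewrite oppr_eq0.
have [d1 d10 H1] := slope_cont x y t0 hn0 e'0.
have [d2 d20 H2] := slope_cont x y t0 hn1 e'0.
exists (Order.min d1 d2); first by rewrite lt_min d10 d20.
move=> s s0; rewrite lt_min => /andP [hd1 hd2].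
have a1 := H1 s s0 hd1; have a2 := H2 s s0 hd2.
set w := dplus L S t x y.
have hb : `|slope (S s) x y h - w| < e' + e'.
  rewrite -(subrK (slope (S t) x y h) (slope (S s) x y h)) -addrA.
  by apply: le_lt_trans (ler_normD _ _) _; apply: ltrD.
have ha : `|slope (S s) x y (- h) - w| < e' + e'.
  rewrite -(subrK (slope (S t) x y (- h)) (slope (S s) x y (- h))) -addrA /w eq.
  by apply: le_lt_trans (ler_normD _ _) _; apply: ltrD.
have l1 := dminus_ge x y s0 h0.
have l2 := dminus_le_dplus x y s0.
have l3 := dplus_le x y s0 h0.
have ee : e' + e' + (e' + e') = e by rewrite /e'; field.
split.
  rewrite -ee; apply: le_lt_trans (sandwich2 (levB w (lev_trans l1 l2)) (levB w l3)) _.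
  by apply: ltrD.
rewrite -eq -/w -ee.
apply: le_lt_trans (sandwich2 (levB w l1) (levB w (lev_trans l2 l3))) _.
by apply: ltrD.
Qed.
End Main.
Set Implicit Arguments. Unset Strict Implicit. Unset Printing Implicit Defensive.

Lemma zero_plus (R : realType) (X : completeNormedModType R) (L : banach_lattice X)
  (S : R -> X -> X) (hS0 : S 0 = id) (x y : X) :
  is_inf L (Aplus (S 0) x y) y /\ is_sup L (Aminus (S 0) x y) y.
Proof.
have E : forall h : R, h != 0 -> h^-1 *: (S 0 (x + h *: y) - S 0 x) = y.
  by move=> h h0; rewrite hS0 /= (addrC x) addrK scalerA mulVf ?scale1r.
split; split.
- by move=> _ [h hp <-]; rewrite E ?gt_eqF //; apply: vle_refl.
- move=> w Hw; have := Hw y; apply; exists 1; first exact: ltr01.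
  by rewrite E ?oner_neq0.
- by move=> _ [h hp <-]; rewrite E ?lt_eqF //; apply: vle_refl.
- move=> w Hw; have := Hw y; apply; exists (-1); first by rewrite /= oppr_lt0 ltr01.
  by rewrite E // oppr_eq0 oner_neq0.
Qed.

Unset Implicit Arguments.
Theorem proposition3p2 (R : realType) (X : completeNormedModType R)
  (L : banach_lattice X) (S : R -> X -> X) :
  order_continuous L -> convex_C0_semigroup L S ->
  (forall (x y : X) (t : R), 0 <= t ->
     dplus L S t x y = dminus L S t x y ->
     (dplus L S s x y @[s --> within [set s : R | 0 <= s] (nbhs t)]
        --> dplus L S t x y) /\
     (dminus L S s x y @[s --> within [set s : R | 0 <= s] (nbhs t)]
        --> dminus L S t x y)) /\
  (forall x y : X,
     (dplus L S s x y @[s --> 0^'+] --> y) /\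
     (dminus L S s x y @[s --> 0^'+] --> y)).
Proof.
move=> oc [hconv hbdd hS0 hadd hcont].
have part1 : forall (x y : X) (t : R), 0 <= t ->
     dplus L S t x y = dminus L S t x y ->
     (dplus L S s x y @[s --> within [set s : R | 0 <= s] (nbhs t)]
        --> dplus L S t x y) /\
     (dminus L S s x y @[s --> within [set s : R | 0 <= s] (nbhs t)]
        --> dminus L S t x y).
  move=> x y t t0 eq; split; apply/cvgrPdist_lt => e e0;
    have [d d0 H] := main_cont oc hconv hbdd hS0 hadd hcont t0 eq e0;
    apply/nbhs_ballP; exists d => //= s; rewrite -ball_normE /ball_ /= => hs s0;
    rewrite distrC; have [] := H s s0 _; rewrite // distrC //.
split => // x y.
have [zp zm] := zero_plus L hS0 x y.
have ep : dplus L S 0 x y = y := inf_uniq (dplus_inf oc hconv x y (lexx 0)) zp.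
have em : dminus L S 0 x y = y := sup_uniq (dminus_sup oc hconv x y (lexx 0)) zm.
have eq : dplus L S 0 x y = dminus L S 0 x y by rewrite ep em.
split; apply/cvgrPdist_lt => e e0;
  have [d d0 H] := main_cont oc hconv hbdd hS0 hadd hcont (lexx 0) eq e0;
  apply/nbhs_ballP; exists d => //= s; rewrite -ball_normE /ball_ /= => hs s0;
  rewrite distrC; have [] := H s (ltW s0) _; rewrite ?ep ?em // distrC //.
Qed.
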